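(* Let $G = NH$ be a finite Frobenius group with Frobenius kernel $N$ and Frobenius complement $H$. Then $\eta(G) = \eta^*(N) + \eta(H)$, where $\eta^*(N)$ is the number of $H$-orbits on the set of $N$-conjugacy classes of maximal cyclic subgroups of $N$.
   Context: A cyclic subgroup $C$ of a finite group $G$ is maximal cyclic if there is no cyclic subgroup $D$ of $G$ with $C < D$. $\eta(G)$ denotes the number of conjugacy classes of maximal cyclic subgroups of $G$. *)

(* Defs.v *)
From mathcomp Require Import all_boot fingroup morphism cyclic frobenius.
Set Implicit Arguments. Unset Strict Implicit. Unset Printing Implicit Defensive.
Local Open Scope group_scope.

Definition maxcyclic (gT : finGroupType) (G : {set gT}) : {set {set gT}} :=
  [set C : {set gT} | [max C of D | (D \subset G) && cyclic D]].

Definition eta (gT : finGroupType) (G : {set gT}) : nat :=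
  #|[set C :^: G | C in maxcyclic G]|.

Definition Nclasses_maxcyclic (gT : finGroupType) (N : {set gT})
  : {set {set {set gT}}} :=
  [set C :^: N | C in maxcyclic N].

Definition conj_family (gT : finGroupType) (X : {set {set gT}}) (h : gT)
  : {set {set gT}} := [set Y :^ h | Y in X].

Definition eta_star (gT : finGroupType) (N H : {set gT}) : nat :=
  #|[set [set conj_family X h | h in H] | X in Nclasses_maxcyclic N]|.

(* Main.v *)
Require Import Defs.
From mathcomp Require Import all_boot fingroup morphism action gproduct cyclic frobenius.
Set Implicit Arguments. Unset Strict Implicit. Unset Printing Implicit Defensive.
Local Open Scope group_scope.

Lemma card_imset_eqrel (aT T1 T2 : finType) (A : {set aT}) (f : aT -> T1) (g : aT -> T2) :
  {in A &, forall x y, (f x == f y) = (g x == g y)} -> #|f @: A| = #|g @: A|.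
Proof.
have key: forall (U V : finType) (f : aT -> U) (g : aT -> V),
  {in A &, forall x y, (g x == g y) -> (f x == f y)} -> #|f @: A| <= #|g @: A|.
  move=> U V f1 g1 H.
  have [->|[x0 Ax0]] := set_0Vmem A; first by rewrite imset0 cards0.
  pose psi y := f1 (odflt x0 [pick x in A | g1 x == y]).
  apply: (leq_trans _ (leq_imset_card psi (g1 @: A))); apply: subset_leq_card.
  apply/subsetP=> _ /imsetP[x Ax ->]; apply/imsetP; exists (g1 x); first exact: imset_f.
  rewrite /psi; case: pickP => [x' /andP[Ax' /eqP e]|/(_ x)]; last by rewrite Ax eqxx.
  by apply/eqP; rewrite eq_sym; apply: H; rewrite ?e.
move=> H; apply/eqP; rewrite eqn_leq; apply/andP; split; apply: key => x y Ax Ay; by rewrite H.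
Qed.

Lemma mcG (gT : finGroupType) (X C : {set gT}) : C \in maxcyclic X -> group_set C.
Proof. by rewrite inE => /maxsetp/andP[]. Qed.

Lemma mcGex (gT : finGroupType) (X C : {set gT}) :
  C \in maxcyclic X -> exists C' : {group gT}, C = C'.
Proof. by move/mcG=> gC; exists (Group gC). Qed.

Lemma mcP (gT : finGroupType) (X C : {group gT}) :
  reflect [/\ C \subset X, cyclic C & forall D : {group gT}, D \subset X -> cyclic D ->
     C \subset D -> D :=: C] (gval C \in maxcyclic X).
Proof.
rewrite inE; apply: (iffP maxgroupP) => [[/andP[sCX cC] mx]|[sCX cC mx]].
  by split=> // D sDX cD; apply: mx; rewrite sDX.
by split=> [|D /andP[]]; [rewrite sCX | apply: mx].
Qed.

Lemma mc_ntriv (gT : finGroupType) (X C : {group gT}) :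
  gval C \in maxcyclic X -> X :!=: 1 -> C :!=: 1.
Proof.
case/mcP=> sCX cC mx ntX; apply: contraNneq ntX => C1.
apply/eqP/trivgP/subsetP => x Xx.
have e := mx <[x]>%G; rewrite cycle_subG Xx cycle_cyclic C1 sub1G in e.
by rewrite -cycle_subG /= e ?sub1G.
Qed.

Lemma mc_sub (gT : finGroupType) (X Y C : {group gT}) :
  X \subset Y -> gval C \in maxcyclic Y -> C \subset X -> gval C \in maxcyclic X.
Proof.
move=> sXY /mcP[sCY cC mx] sCX; apply/mcP; split=> // D sDX cD sCD.
by apply: mx => //; apply: subset_trans sXY.
Qed.

Lemma mc_conj (gT : finGroupType) (X C : {group gT}) g :
  g \in X -> gval C \in maxcyclic X -> C :^ g \in maxcyclic X.
Proof.
move=> Xg /mcP[sCX cC mx]; apply/(mcP X (C :^ g)%G); split.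
- by rewrite /= -(conjGid Xg) conjSg.
- by rewrite /= cyclicJ.
move=> D sDX cD sCD.
have sC : C \subset D :^ g^-1 by rewrite -sub_conjg.
have e := mx (D :^ g^-1)%G; rewrite /= cyclicJ cD sC in e.
rewrite /= -e ?conjsgKV //; by rewrite -(conjGid (groupVr Xg)) conjSg.
Qed.

Lemma classes_eq (gT : finGroupType) (A : {group gT}) (C D : {set gT}) :
  (C :^: A == D :^: A) = (C \in D :^: A).
Proof.
rewrite -!orbitJs; apply/eqP/idP => [<-|/orbit_eqP//]; exact: orbit_refl.
Qed.

Lemma conjfam_eq (gT : finGroupType) (N : {group gT}) (D : {set gT}) h :
  h \in 'N(N) -> conj_family (D :^: N) h = (D :^ h) :^: N.
Proof.
move=> nNh; apply/setP=> Z; apply/imsetP/imsetP => [[Y /imsetP[n Nn ->] ->]|[n Nn ->]].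
  by exists (n ^ h); [rewrite memJ_norm | rewrite -!conjsgM conjgC].
exists (D :^ (n ^ h^-1)); first by apply: imset_f; rewrite memJ_norm ?groupV.
rewrite -!conjsgM; congr (_ :^ _); by rewrite -{1}(conjgKV h n) -conjgC.
Qed.

Lemma cyc_cases (gT : finGroupType) (G N H D : {group gT}) :
  [Frobenius G = N ><| H] -> D \subset G -> cyclic D ->
  D \subset N \/ exists2 g, g \in G & D \subset H :^ g.
Proof.
move=> frobG sDG /cyclicP[x defD]; rewrite defD cycle_subG in sDG *.
have [defG _ _ _ _] := Frobenius_context frobG.
have [_ /mulG_sub[sNG sHG] _ _] := sdprodP defG.
have := Frobenius_partition frobG => /cover_partition covG.
rewrite -covG in sDG; have [B PB xB] := bigcupP sDG.
case/setU1P: PB => [eB | /imsetP[n Nn defB]]; first by left; rewrite cycle_subG -eB.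
right; exists n; first exact: (subsetP sNG).
by rewrite cycle_subG; move: xB; rewrite defB; apply/subsetP; rewrite conjSg subsetDl.
Qed.

Lemma NIHg (gT : finGroupType) (G N H : {group gT}) g :
  [Frobenius G = N ><| H] -> g \in G -> N :&: H :^ g = 1.
Proof.
move=> frobG Gg; have [defG _ _ _ _] := Frobenius_context frobG.
have [nsNG _ _ _ tiNH] := sdprod_context defG.
by rewrite -{1}(normsP (normal_norm nsNG) g Gg) -conjIg tiNH conjs1g.
Qed.

Lemma Hconj (gT : finGroupType) (G N H D : {group gT}) g :
  [Frobenius G = N ><| H] -> D \subset H -> D :!=: 1 -> g \in G -> D :^ g \subset H ->
  g \in H.
Proof.
move=> frobG sDH ntD Gg sDgH.
have /andP[_ /normedTI_memJ_P[_ _ tiH]] := FrobeniusWcompl frobG.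
have [x Dx ntx] := trivgPn _ ntD.
have Hx : x \in H^# by rewrite !inE ntx (subsetP sDH).
rewrite -(tiH x g Hx Gg) !inE conjg_eq1 ntx (subsetP sDgH) //.
by rewrite memJ_conjg.
Qed.

Lemma L_N (gT : finGroupType) (G N H C : {group gT}) :
  [Frobenius G = N ><| H] -> gval C \in maxcyclic N -> gval C \in maxcyclic G.
Proof.
move=> frobG MC; have [defG ntN ntH _ _] := Frobenius_context frobG.
have [_ /mulG_sub[sNG sHG] _ _] := sdprodP defG.
have ntC := mc_ntriv MC ntN; case/mcP: MC => sCN cC mx.
apply/mcP; split=> [||D sDG cD sCD]; first exact: subset_trans sNG; first by [].
have [sDN|[g Gg sDHg]] := cyc_cases frobG sDG cD; first exact: mx.
case/eqP: ntC; apply/trivgP; rewrite -(NIHg frobG Gg) subsetI sCN.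
exact: subset_trans sDHg.
Qed.

Lemma L_H (gT : finGroupType) (G N H C : {group gT}) :
  [Frobenius G = N ><| H] -> gval C \in maxcyclic H -> gval C \in maxcyclic G.
Proof.
move=> frobG MC; have [defG ntN ntH _ _] := Frobenius_context frobG.
have [_ /mulG_sub[sNG sHG] _ tiNH] := sdprodP defG.
have ntC := mc_ntriv MC ntH; case/mcP: MC => sCH cC mx.
apply/mcP; split=> [||D sDG cD sCD]; first exact: subset_trans sHG; first by [].
have [sDN|[g Gg sDHg]] := cyc_cases frobG sDG cD.
  case/eqP: ntC; apply/trivgP; rewrite -tiNH subsetI sCH andbT.
  exact: subset_trans sDN.
have sCHg : C \subset H :^ g by apply: subset_trans sDHg.
have Hg : g^-1 \in H.
  by apply: (Hconj frobG sCH ntC); rewrite ?groupV // sub_conjgV.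
apply: mx => //; by rewrite -(conjGid (groupVr Hg)) invgK.
Qed.

Lemma L_split (gT : finGroupType) (G N H C : {group gT}) :
  [Frobenius G = N ><| H] -> gval C \in maxcyclic G ->
  gval C \in maxcyclic N \/ exists2 g, g \in G & C :^ g \in maxcyclic H.
Proof.
move=> frobG MC; have [defG ntN ntH _ _] := Frobenius_context frobG.
have [_ /mulG_sub[sNG sHG] _ _] := sdprodP defG.
have /mcP[sCG cC _] := MC.
have [sCN|[g Gg sCHg]] := cyc_cases frobG sCG cC; first by left; exact: mc_sub MC sCN.
right; exists g^-1; first by rewrite groupV.
apply: (mc_sub (Y := G) (C := (C :^ g^-1)%G)) => //; first exact: mc_conj (groupVr Gg) MC.
by rewrite /= sub_conjgV.
Qed.

Theorem proposition2p2 (gT : finGroupType) (G N H : {group gT}) :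
  [Frobenius G = N ><| H] -> eta G = (eta_star N H + eta H)%N.
Proof.
move=> frobG; have [defG ntN ntH _ _] := Frobenius_context frobG.
have [_ /mulG_sub[sNG sHG] nNH tiNH] := sdprodP defG.
have [nsNG _ _ _ _] := sdprod_context defG.
pose f := fun C : {set gT} => C :^: G.
have E : f @: maxcyclic G = f @: maxcyclic N :|: f @: maxcyclic H.
  apply/eqP; rewrite eqEsubset; apply/andP; split.
    apply/subsetP=> _ /imsetP[C MC ->]; have [C' eC] := mcGex MC; subst C.
    have [MN|[g Gg MH]] := L_split frobG MC; first by rewrite inE imset_f.
    rewrite inE; apply/orP; right; apply/imsetP; exists (C' :^ g) => //.
    apply/eqP; rewrite /f classes_eq; apply/imsetP; exists g^-1; rewrite ?groupV //.
    by rewrite conjsgK.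
  apply/subUsetP; split; apply/subsetP => _ /imsetP[C MC ->]; apply: imset_f;
    have [C' eC] := mcGex MC; subst C.
    exact: L_N frobG MC.
  exact: L_H frobG MC.
have D0 : f @: maxcyclic N :&: f @: maxcyclic H = set0.
  apply/setP=> Z; rewrite !inE; apply/andP => -[/imsetP[C MC ->] /imsetP[D MD]].
  have [C' eC] := mcGex MC; have [D' eD] := mcGex MD; subst C D.
  move/eqP; rewrite /f eq_sym classes_eq => /imsetP[g Gg eDC].
  have ntD := mc_ntriv MD ntH; case/eqP: ntD; apply/trivgP.
  have /mcP[sCN _ _] := MC; have /mcP[sDH _ _] := MD.
  rewrite -tiNH subsetI sDH andbT eDC.
  by rewrite -(normsP (normal_norm nsNG) g Gg) conjSg.
have -> : eta G = (#|f @: maxcyclic N| + #|f @: maxcyclic H|)%N.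
  by rewrite /eta -/f E -cardsUI D0 cards0 addn0.
congr (_ + _)%N.
  rewrite /eta_star /Nclasses_maxcyclic -imset_comp; apply: card_imset_eqrel => C D MC MD /=.
  have [C' eC] := mcGex MC; have [D' eD] := mcGex MD; subst C D.
  have orbE : forall X, [set conj_family X h | h in H] = orbit ('Js^*)%act H X by [].
  rewrite !orbE /f classes_eq; apply/idP/idP.
    case/imsetP=> g Gg ->; rewrite -(sdprodWC defG) in Gg.
    case/mulsgP: Gg => h n Hh Nn ->.
    apply/eqP/orbit_eqP; apply/imsetP; exists h => //.
    change ((D' :^ (h * n)) :^: N = conj_family (D' :^: N) h).
    rewrite conjfam_eq ?(subsetP nNH) //; apply/eqP; rewrite classes_eq conjsgM.
    exact: imset_f.
  move/eqP/orbit_eqP/imsetP=> [h Hh] e; have : C' :^: N = conj_family (D' :^: N) h by exact: e.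
  rewrite conjfam_eq ?(subsetP nNH) // => /eqP; rewrite classes_eq => /imsetP[n Nn ->].
  rewrite -conjsgM; apply: imset_f; rewrite groupM //; [exact: (subsetP sHG) | exact: (subsetP sNG)].
rewrite /eta; apply: card_imset_eqrel => C D MC MD.
have [C' eC] := mcGex MC; have [D' eD] := mcGex MD; subst C D.
rewrite /f !classes_eq; apply/idP/idP; last first.
  by case/imsetP=> h Hh ->; apply: imset_f; rewrite (subsetP sHG).
case/imsetP=> g Gg eCD; apply/imsetP; exists g => //.
have /mcP[sCH _ _] := MC; have /mcP[sDH _ _] := MD.
by apply: (Hconj frobG sDH (mc_ntriv MD ntH) Gg); rewrite -eCD.
Qed.
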